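(* Let $p$ be an odd prime. Then $$\sum_{k=0}^{\frac{p-1}2}\frac{k^2\binom{2k}k^2}{32^k}\equiv\begin{cases}(-1)^{\frac{p+3}4}2^{-\frac{p-1}2}\dfrac{(\frac{p+3}2)!}{(\frac{p-5}4)!\,(\frac{p+3}4)!}\pmod{p^2}&\text{if }p\equiv1\pmod 4,\\ (-1)^{\frac{p+1}4}2^{-\frac{p-1}2}\dfrac{(\frac{p+1}2)!}{(\frac{p-3}4)!\,(\frac{p+1}4)!}\pmod{p^2}&\text{if }p\equiv3\pmod4.\end{cases}$$
   Context: Congruences are between rational numbers whose denominators are prime to $p$. *)

(* Defs.v *)
From HB Require Import structures.
From mathcomp Require Import all_boot all_order all_algebra.
Set Implicit Arguments. Unset Strict Implicit. Unset Printing Implicit Defensive.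
Import Order.TTheory GRing.Theory Num.Theory.
Local Open Scope ring_scope.

Definition p_integral (p : nat) (r : rat) : bool := coprime p `|denq r|%N.

(* a = b (mod m) for rationals whose denominators are prime to p:
   (a - b) / m is p-integral. *)
Definition rat_cong (p : nat) (m : nat) (a b : rat) : Prop :=
  p_integral p ((a - b) / m%:R).

(* Main.v *)
Require Import Defs.
From HB Require Import structures.
From mathcomp Require Import all_boot all_order all_algebra.
From mathcomp Require Import ring lra zify.
Import Order.TTheory GRing.Theory Num.Theory.
Local Open Scope ring_scope.

Definition ee (x : rat) (k : nat) : rat :=
  \prod_(j < k) ((x - j%:R) * (x + 1 + j%:R) / ((j.+1)%:R ^+ 2)).

Lemma ee0 x : ee x 0 = 1. Proof. by rewrite /ee big_ord0. Qed.
Lemma eeS x k : ee x k.+1 = ee x k * ((x - k%:R) * (x + 1 + k%:R) / ((k.+1)%:R ^+ 2)).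
Proof. by rewrite /ee big_ord_recr. Qed.

Lemma ee_shift x k : ee (x + 1) k * (x + 1 - k%:R) = ee x k * (x + 1 + k%:R).
Proof.
elim: k => [|k IH]; first by rewrite !ee0; ring.
rewrite !eeS.
have -> : ee (x + 1) k * ((x + 1 - k%:R) * (x + 1 + 1 + k%:R) / (k.+1%:R ^+ 2)) *
   (x + 1 - k.+1%:R) = (ee (x + 1) k * (x + 1 - k%:R)) * ((x + 1 + 1 + k%:R) *
   (x + 1 - k.+1%:R) / (k.+1%:R ^+ 2)) by ring.
rewrite IH; ring.
Qed.

Lemma ee_up x k : ee (x + 1) k.+1 = ee x k * ((x + 1 + k%:R) * (x + 2 + k%:R) / (k.+1%:R ^+ 2)).
Proof.
rewrite eeS.
have -> : ee (x + 1) k * ((x + 1 - k%:R) * (x + 1 + 1 + k%:R) / (k.+1%:R ^+ 2)) =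
  (ee (x + 1) k * (x + 1 - k%:R)) * ((x + 1 + 1 + k%:R) / (k.+1%:R ^+ 2)) by ring.
rewrite ee_shift; ring.
Qed.

Lemma ee_down x k : ee (x - 1) k.+1 = ee x k * ((x - k%:R) * (x - 1 - k%:R) / (k.+1%:R ^+ 2)).
Proof.
rewrite eeS.
have h := ee_shift (x - 1) k; rewrite subrK in h.
have -> : ee (x - 1) k * ((x - 1 - k%:R) * (x - 1 + 1 + k%:R) / (k.+1%:R ^+ 2)) =
  (ee (x - 1) k * (x + k%:R)) * ((x - 1 - k%:R) / (k.+1%:R ^+ 2)) by ring.
rewrite -h; ring.
Qed.

Lemma ee_rec x k : (x + 1) * ee (x + 1) k.+1 =
  (2 * x + 1) * (ee x k.+1 + 2 * ee x k) - x * ee (x - 1) k.+1.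
Proof.
rewrite ee_up ee_down eeS; field.
by rewrite addrC natr1 pnatr_eq0.
Qed.

Lemma sum_rec (w : nat -> rat) x N :
  \sum_(k < N.+1) w k * ((x + 1) * ee (x + 1) k - (2 * x + 1) * ee x k + x * ee (x - 1) k)
  = \sum_(k < N) w k.+1 * (2 * (2 * x + 1)) * ee x k.
Proof.
rewrite big_ord_recl /= !ee0.
have -> : (x + 1) * 1 - (2 * x + 1) * 1 + x * 1 = 0 by ring.
rewrite mulr0 add0r; apply: eq_bigr => i _.
rewrite /bump /= add1n ee_rec; ring.
Qed.

Lemma ee_van (n i : nat) : ee n%:R (n + i).+1 = 0.
Proof.
elim: i => [|i IH]; first by rewrite addn0 eeS subrr !mul0r mulr0.
by rewrite addnS eeS IH !mul0r.
Qed.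

Lemma ee_ext (w : nat -> rat) (n d : nat) :
  \sum_(k < (n.+1 + d)) w k * ee n%:R k = \sum_(k < n.+1) w k * ee n%:R k.
Proof.
elim: d => [|d IH]; first by rewrite addn0.
by rewrite addnS big_ord_recr /= IH addSn ee_van mulr0 addr0.
Qed.

Definition Fw (w : nat -> rat) (n : nat) := \sum_(k < n.+1) w k * ee n%:R k.

Lemma Fw_ext (w : nat -> rat) (n d : nat) : \sum_(k < (n.+1 + d)) w k * ee n%:R k = Fw w n.
Proof. exact: ee_ext. Qed.

Lemma Fw_ext' (w : nat -> rat) (n N : nat) : (n < N)%N ->
  \sum_(k < N) w k * ee n%:R k = Fw w n.
Proof. by move=> h; rewrite -(subnKC h) Fw_ext. Qed.

Lemma Frec (w : nat -> rat) (m : nat) : let n := m.+1 in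
  (n.+1)%:R * Fw w n.+1 - (2 * n%:R + 1) * Fw w n + n%:R * Fw w m
  = (2 * (2 * n%:R + 1)) * Fw (fun k => w k.+1) n.
Proof.
move=> n; have := sum_rec w n%:R (n.+2).
have E : forall k : 'I_n.+3, w k * ((n%:R + 1) * ee (n%:R + 1) k - (2 * n%:R + 1) * ee n%:R k
   + n%:R * ee (n%:R - 1) k) = (n.+1)%:R * (w k * ee (n.+1)%:R k)
  + (- (2 * n%:R + 1)) * (w k * ee n%:R k) + n%:R * (w k * ee m%:R k).
  move=> k; rewrite natr1 /n -[(m.+1)%:R]natr1 addrK; ring.
rewrite (eq_bigr _ (fun k _ => E k)) big_split big_split /= -!mulr_sumr.
rewrite !Fw_ext' ?mulNr; try by rewrite /n.
move=> ->.
rewrite -(Fw_ext' _ n n.+2); last by rewrite /n.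
rewrite mulr_sumr; apply: eq_bigr => i _; ring.
all: lia.
Qed.

Definition w0 (k : nat) : rat := (- 2^-1) ^+ k.
Definition w1 (k : nat) : rat := k%:R * w0 k.
Definition w2 (k : nat) : rat := k%:R ^+ 2 * w0 k.

Lemma Fw_lin (w u v z : nat -> rat) a b c n :
  (forall k, w k = a * u k + b * v k + c * z k) ->
  Fw w n = a * Fw u n + b * Fw v n + c * Fw z n.
Proof.
move=> h; rewrite /Fw !mulr_sumr -!big_split; apply: eq_bigr => i _.
rewrite h /=; ring.
Qed.

Lemma w0S k : w0 k.+1 = (- 2^-1) * w0 k + 0 * w0 k + 0 * w0 k.
Proof. rewrite /w0 exprS; ring. Qed.
Lemma w1S k : w1 k.+1 = (- 2^-1) * w1 k + (- 2^-1) * w0 k + 0 * w0 k.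
Proof. rewrite /w1 /w0 exprS -natr1; ring. Qed.
Lemma w2S k : w2 k.+1 = (- 2^-1) * w2 k + (- 1) * w1 k + (- 2^-1) * w0 k.
Proof. rewrite /w2 /w1 /w0 [(- 2^-1) ^+ k.+1]exprS -natr1; by field. Qed.

Lemma two_ne0 : (2 : rat) != 0. Proof. by []. Qed.

Lemma solve (c X a b Y Z R : rat) : c != 0 -> c * X - a * Y + b * Z = R ->
  X = (R + a * Y - b * Z) / c.
Proof. by move=> hc <-; field. Qed.

Lemma natS_ne0 m : (m.+1)%:R != 0 :> rat.
Proof. by rewrite pnatr_eq0. Qed.

Lemma recw (w : nat -> rat) m : Fw w m.+2 =
  (2 * (2 * (m.+1)%:R + 1) * Fw (fun k => w k.+1) m.+1
    + (2 * (m.+1)%:R + 1) * Fw w m.+1 - (m.+1)%:R * Fw w m) / (m.+2)%:R.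
Proof. apply: solve; first exact: natS_ne0. exact: (Frec w m). Qed.

Definition F0 := Fw w0.
Definition F1 := Fw w1.
Definition F2 := Fw w2.

Lemma rec0 m : F0 m.+2 =
  (2 * (2 * (m.+1)%:R + 1) * ((- 2^-1) * F0 m.+1 + 0 * F0 m.+1 + 0 * F0 m.+1)
    + (2 * (m.+1)%:R + 1) * F0 m.+1 - (m.+1)%:R * F0 m) / (m.+2)%:R.
Proof. by rewrite /F0 recw (@Fw_lin _ _ _ _ _ _ _ _ w0S). Qed.
Lemma rec1 m : F1 m.+2 =
  (2 * (2 * (m.+1)%:R + 1) * ((- 2^-1) * F1 m.+1 + (- 2^-1) * F0 m.+1 + 0 * F0 m.+1)
    + (2 * (m.+1)%:R + 1) * F1 m.+1 - (m.+1)%:R * F1 m) / (m.+2)%:R.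
Proof. by rewrite /F1 recw (@Fw_lin _ _ _ _ _ _ _ _ w1S). Qed.
Lemma rec2 m : F2 m.+2 =
  (2 * (2 * (m.+1)%:R + 1) * ((- 2^-1) * F2 m.+1 + (- 1) * F1 m.+1 + (- 2^-1) * F0 m.+1)
    + (2 * (m.+1)%:R + 1) * F2 m.+1 - (m.+1)%:R * F2 m) / (m.+2)%:R.
Proof. by rewrite /F2 recw (@Fw_lin _ _ _ _ _ _ _ _ w2S). Qed.

Definition u (m : nat) : rat := (-1) ^+ m * ((2 * m)`!)%:R / ((m`! * m`!)%:R * 4 ^+ m).

Lemma uS m : u m.+1 = - ((2 * m).+1)%:R / ((2 * m).+2)%:R * u m.
Proof.
rewrite /u mulnS !factS !natrM !exprS.
have h1 := fact_gt0 m; have h2 := fact_gt0 (2 * m).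
field; rewrite ?pnatr_eq0 -?lt0n //.
rewrite expf_neq0 // h1 /=; have := ler0n rat m.
by move=> hm; apply/andP; split; apply: lt0r_neq0; lra.
Qed.

Ltac nz m := rewrite ?pnatr_eq0 //; have := ler0n rat m; move=> hm;
  repeat (apply/andP; split); try (apply: expf_neq0); try done; apply: lt0r_neq0; lra.

Lemma base : (F0 0 = 1 /\ F1 0 = 0 /\ F2 0 = 0 /\ F0 1 = 0 /\ F1 1 = -1 /\ F2 1 = -1).
Proof.
rewrite /F0 /F1 /F2 /Fw /w0 /w1 /w2.
rewrite !big_ord_recr !big_ord0 /= !eeS !ee0.
by repeat split; field.
Qed.

Lemma closed m :
  F0 (2 * m) = u m /\ F0 (2 * m).+1 = 0 /\ F1 (2 * m) = 0 /\
  F1 (2 * m).+1 = - ((2 * m).+1)%:R * u m /\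
  F2 (2 * m) = - (2 * m)%:R * ((2 * m).+1)%:R * u m /\
  F2 (2 * m).+1 = - ((2 * m).+1)%:R * u m.
Proof.
elim: m => [|m [a0 [b0 [a1 [b1 [a2 b2]]]]]].
  have [? [? [? [? [? ?]]]]] := base.
  rewrite /u /=; repeat split => //; field.
have e : (2 * m.+1 = (2 * m).+2)%N by rewrite mulnS.
rewrite e.
have c0 : F0 (2 * m).+2 = u m.+1.
  by rewrite rec0 ?a0 ?b0 uS; field; nz m.
have c1 : F1 (2 * m).+2 = 0.
  by rewrite rec1 ?a0 ?b0 ?a1 ?b1; field; nz m.
have c2 : F2 (2 * m).+2 = - ((2 * m).+2)%:R * ((2 * m).+3)%:R * u m.+1.
  by rewrite rec2 ?a0 ?b0 ?a1 ?b1 ?a2 ?b2 uS; field; nz m.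
split => //; split.
  by rewrite rec0 ?c0 ?b0; field; nz m.
split => //; split.
  by rewrite rec1 ?c0 ?c1 ?b1 uS; field; nz m.
split => //.
by rewrite rec2 ?c0 ?c1 ?c2 ?b0 ?b1 ?b2 ?uS; field; nz m.
Qed.

Lemma pint_frac p (n d : int) : coprime p `|d|%N -> p_integral p (n%:~R / d%:~R).
Proof.
rewrite /p_integral; case: (divqP n d) => [_|k x kn0]; first by move=> _; rewrite (denq_int 0) coprimen1.
by rewrite abszM coprimeMr => /andP[].
Qed.

Lemma pint_repr p r : p_integral p r -> r = (numq r)%:~R / (denq r)%:~R.
Proof. by rewrite divq_num_den. Qed.

Lemma pintM p x y : p_integral p x -> p_integral p y -> p_integral p (x * y).
Proof.
move=> hx hy; rewrite -[x]divq_num_den -[y]divq_num_den.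
have -> : (numq x)%:~R / (denq x)%:~R * ((numq y)%:~R / (denq y)%:~R) =
  (numq x * numq y)%:~R / (denq x * denq y)%:~R :> rat.
  by rewrite !rmorphM /= invfM; ring.
by apply: pint_frac; rewrite abszM coprimeMr; apply/andP; split.
Qed.

Lemma pintD p x y : p_integral p x -> p_integral p y -> p_integral p (x + y).
Proof.
move=> hx hy; rewrite -[x]divq_num_den -[y]divq_num_den.
have -> : (numq x)%:~R / (denq x)%:~R + ((numq y)%:~R / (denq y)%:~R) =
  (numq x * denq y + numq y * denq x)%:~R / (denq x * denq y)%:~R :> rat.
  rewrite !rmorphD !rmorphM /=; field.
  by rewrite !intr_eq0 !denq_eq0.
by apply: pint_frac; rewrite abszM coprimeMr; apply/andP; split.
Qed.

Lemma pintN p x : p_integral p x -> p_integral p (- x).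
Proof. by rewrite /p_integral denqN. Qed.

Lemma pintB p x y : p_integral p x -> p_integral p y -> p_integral p (x - y).
Proof. by move=> hx hy; apply: pintD => //; apply: pintN. Qed.

Lemma pint_int p (z : int) : p_integral p z%:~R.
Proof. by rewrite /p_integral denq_int coprimen1. Qed.

Lemma pint_nat p (z : nat) : p_integral p z%:R.
Proof. by have := pint_int p z; rewrite pmulrn. Qed.

Lemma pint_invnat p (d : nat) : coprime p d -> p_integral p (d%:R)^-1.
Proof.
move=> h; have := @pint_frac p 1 d h.
by rewrite pmulrn mul1r.
Qed.

Lemma pint_sum p n (F : nat -> rat) : (forall i, (i < n)%N -> p_integral p (F i)) ->
  p_integral p (\sum_(i < n) F i).
Proof.
move=> h; elim: n h => [|n IH] h; first by rewrite big_ord0 (pint_nat p 0).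
rewrite big_ord_recr /=; apply: pintD; last exact: h.
by apply: IH => i hi; apply: h; exact: ltnW.
Qed.

Lemma pint_sumo p n (F : 'I_n -> rat) : (forall i, p_integral p (F i)) ->
  p_integral p (\sum_(i < n) F i).
Proof.
move=> h; apply: (big_ind (fun x => p_integral p x)) => //.
- exact: (pint_nat p 0).
- exact: pintD.
Qed.

Lemma binc k : ('C(2 * k, k))%:R = ((2 * k)`!)%:R / ((k`! * k`!)%:R) :> rat.
Proof.
have h := bin_fact (leq_addl k k).
rewrite addnK addnn -mul2n in h.
by rewrite -h natrM mulfK // pnatr_eq0 -lt0n muln_gt0 !fact_gt0 /=.
Qed.

Lemma cop_small p m : prime p -> (0 < m)%N -> (m < p)%N -> coprime p m.
Proof. by move=> hp h0 h1; rewrite prime_coprime // gtnNdvd. Qed.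

Definition aa (k : nat) : rat := ('C(2 * k, k))%:R ^+ 2 / 16 ^+ k.
Definition BB (n k : nat) : rat := (-1) ^+ k * ee n%:R k.

Lemma aaS k : aa k.+1 = aa k * (((2 * k).+1)%:R ^+ 2 / (4 * (k.+1)%:R ^+ 2)).
Proof.
rewrite /aa !binc mulnS !factS !natrM !exprS.
have h1 := fact_gt0 k; have h2 := fact_gt0 (2 * k).
field; rewrite ?pnatr_eq0 -?lt0n ?h1 ?h2 //=; nz k.
Qed.

Lemma BBS n k : BB n k.+1 = BB n k * (- ((n%:R - k%:R) * (n%:R + 1 + k%:R)) / (k.+1)%:R ^+ 2).
Proof. rewrite /BB eeS exprS; ring. Qed.

Lemma qint p n k : prime p -> p = (2 * n).+1 -> (k <= n)%N ->
  p_integral p (aa k) /\ p_integral p ((aa k - BB n k) / (p ^ 2)%:R).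
Proof.
move=> hp hpn; elim: k => [|k IH] hk.
  rewrite /aa /BB ee0 bin0 !expr0 divr1 expr1n subrr mul0r.
  by split; [exact: (pint_nat p 1) | exact: (pint_nat p 0)].
have [ha hq] := IH (ltnW hk).
set d := (4 * k.+1 ^ 2)%N.
have hd : coprime p d.
  have hp3 : (2 < p)%N by rewrite hpn; lia.
  rewrite /d coprimeMr (_ : 4 = 2 ^ 2)%N // !coprime_pexpr //.
  by rewrite !cop_small //; lia.
set t := ((2 * k).+1 ^ 2)%:R * (d%:R)^-1 : rat.
have ht : p_integral p t by apply: pintM; [exact: pint_nat | exact: pint_invnat].
have et : ((2 * k).+1)%:R ^+ 2 / (4 * (k.+1)%:R ^+ 2) = t.
  by rewrite /t /d natrM !natrX.
split; first by rewrite aaS et; exact: pintM.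
have hp0 : (p%:R : rat) != 0 by rewrite pnatr_eq0; case: (p) hp.
have E : (aa k.+1 - BB n k.+1) / (p ^ 2)%:R =
   t * ((aa k - BB n k) / (p ^ 2)%:R) + (aa k - (p ^ 2)%:R * ((aa k - BB n k) / (p ^ 2)%:R)) * (d%:R)^-1.
  rewrite aaS BBS -et /d natrM natrX natrX.
  move: hp0; rewrite hpn => hp0.
  have hk0 := ler0n rat k; field; nz n.
rewrite E; apply: pintD; first exact: pintM.
apply: pintM; last exact: pint_invnat.
apply: pintB => //; apply: pintM => //; exact: pint_nat.
Qed.

Lemma SF p n : prime p -> p = (2 * n).+1 ->
  p_integral p ((\sum_(0 <= k < n.+1) ((k ^ 2 * 'C(2 * k, k) ^ 2)%N%:R / (32%:R ^+ k))
     - F2 n) / (p ^ 2)%:R).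
Proof.
move=> hp hpn.
rewrite big_mkord /F2 /Fw -sumrB mulr_suml; apply: pint_sumo => i.
have hi := ltn_ord i.
have hi2 : (i <= n)%N by rewrite -ltnS.
have [_ hq] := qint p n i hp hpn hi2.
have -> : ((i ^ 2 * 'C(2 * i, i) ^ 2)%N%:R / 32%:R ^+ i - w2 i * ee n%:R i) / (p ^ 2)%:R
  = (i ^ 2)%:R * ((2 ^ i)%:R)^-1 * ((aa i - BB n i) / (p ^ 2)%:R).
  rewrite /aa /BB /w2 /w0 natrM !natrX (exprNn (2^-1)) (_ : 32%:R = 16 * 2 :> rat); last first.
    by rewrite -natrM.
  rewrite exprMn exprVn.
  have hp0 : (p%:R : rat) != 0 by rewrite pnatr_eq0; case: (p) hp.
  field; rewrite ?expf_neq0 //.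
  by rewrite hp0.
apply: pintM; last exact: hq. apply: pintM; first exact: pint_nat.
apply: pint_invnat; apply: coprimeXr; apply: cop_small => //; have := prime_gt1 hp; lia.
Qed.


Theorem corollary2p1 (p : nat) (hp : prime p) (hodd : odd p) :
  let S : rat := \sum_(0 <= k < ((p - 1) %/ 2).+1)
      ((k ^ 2 * 'C(2 * k, k) ^ 2)%N%:R / (32%:R ^+ k)) in
  ((p %% 4 = 1)%N ->
     rat_cong p (p ^ 2) S
       ((-1) ^+ ((p + 3) %/ 4) / (2%:R ^+ ((p - 1) %/ 2))
        * ((((p + 3) %/ 2)`!)%:R / ((((p - 5) %/ 4)`! * ((p + 3) %/ 4)`!)%N%:R))))
  /\
  ((p %% 4 = 3)%N ->
     rat_cong p (p ^ 2) S
       ((-1) ^+ ((p + 1) %/ 4) / (2%:R ^+ ((p - 1) %/ 2))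
        * ((((p + 1) %/ 2)`!)%:R / ((((p - 3) %/ 4)`! * ((p + 1) %/ 4)`!)%N%:R)))).
Proof.
move=> S; have hp1 := prime_gt1 hp; split => h4.
- have [m' hm4] : exists m', p = (4 * m'.+1).+1.
    by exists (p %/ 4)%N.-1; lia.
  have e1 : ((p - 1) %/ 2 = 2 * m'.+1)%N by lia.
  have e2 : ((p + 3) %/ 4 = m'.+2)%N by lia.
  have e3 : ((p + 3) %/ 2 = (2 * m'.+1).+2)%N by lia.
  have e4 : ((p - 5) %/ 4 = m')%N by lia.
  rewrite /rat_cong /S e1 e2 e3 e4.
  have [_ [_ [_ [_ [c _]]]]] := closed m'.+1.
  have -> : (-1) ^+ m'.+2 / 2%:R ^+ (2 * m'.+1) *
     (((2 * m'.+1).+2)`!%:R / (m'`! * m'.+2`!)%N%:R) = F2 (2 * m'.+1).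
    rewrite c /u exprM !factS !natrM !exprS.
    have h1 := fact_gt0 m'; have h2 := fact_gt0 (2 * m'.+1).
    field; rewrite ?pnatr_eq0 -?lt0n ?h1 ?h2 //=; nz m'.
  by apply: SF => //; lia.
- have [m hm4] : exists m, p = (4 * m).+3.
    by exists (p %/ 4)%N; lia.
  have e1 : ((p - 1) %/ 2 = (2 * m).+1)%N by lia.
  have e2 : ((p + 1) %/ 4 = m.+1)%N by lia.
  have e3 : ((p + 1) %/ 2 = (2 * m).+2)%N by lia.
  have e4 : ((p - 3) %/ 4 = m)%N by lia.
  rewrite /rat_cong /S e1 e2 e3 e4.
  have [_ [_ [_ [_ [_ c]]]]] := closed m.
  have -> : (-1) ^+ m.+1 / 2%:R ^+ (2 * m).+1 *
     (((2 * m).+2)`!%:R / (m`! * m.+1`!)%N%:R) = F2 (2 * m).+1.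
    rewrite c /u !exprS exprM !factS !natrM.
    have h1 := fact_gt0 m; have h2 := fact_gt0 (2 * m).
    field; rewrite ?pnatr_eq0 -?lt0n ?h1 ?h2 //=; nz m.
  by apply: SF => //; lia.
Qed.
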